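(* Let $T$, $S$, $A$ be closed subspaces in $X^2$ with $D(T)=D(S)=:D\subset D(A)$ and $T=S+A$. Then $T(0)^\perp\subset S(0)^\perp$ and $T(0)^\perp\subset A(0)^\perp$; let $P:S(0)^\perp\to T(0)^\perp$ and $Q:A(0)^\perp\to T(0)^\perp$ be the orthogonal projections. Then $$T_sx=PS_sx+QA_sx\quad\text{for all }x\in D.$$ Furthermore, if $S$ and $A$ are Hermitian subspaces in $X^2$, then $PS_s$ and $QA_s$ (restricted to $D$) are Hermitian operators in $D$, i.e. $\langle PS_sx,y\rangle=\langle x,PS_sy\rangle$ and $\langle QA_sx,y\rangle=\langle x,QA_sy\rangle$ for all $x,y\in D$.
   Context: $X$ is a complex Hilbert space and $X^2=X\times X$ carries the inner product $\langle (x,f),(y,g)\rangle=\langle x,y\rangle+\langle f,g\rangle$. A subspace $T$ in $X^2$ means a linear subspace of $X^2$ (a linear relation); a linear operator in $X$ is identified with its graph. Notation: $D(T)=\{x:(x,f)\in T \text{ for some } f\}$, $R(T)=\{f:(x,f)\in T \text{ for some } x\}$, $T(x)=\{f:(x,f)\in T\}$. The adjoint is $T^*=\{(y,g)\in X^2:\langle g,x\rangle=\langle y,f\rangle \text{ for all }(x,f)\in T\}$; $T$ is Hermitian if $T\subset T^*$ and self-adjoint if $T=T^*$. For subspaces $S,A$ in $X^2$, $S+A=\{(x,f+g):(x,f)\in S,(x,g)\in A\}$. For a closed subspace $T$, set $T_\infty=\{(0,g)\in X^2:(0,g)\in T\}$ and $T_s=T\ominus T_\infty$ (orthogonal complement of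 $T_\infty$ in $T$), so $T=T_s\oplus T_\infty$; $T_s$ is the graph of a linear operator (the operator part of $T$) with $D(T_s)=D(T)$ and $R(T_s)\subset T(0)^\perp$, and it is regarded as an operator in $T(0)^\perp$. *)

(* Defs.v *)
From Stdlib Require Import Reals ClassicalEpsilon.
Open Scope R_scope.
Set Implicit Arguments.

Record C := mkC { Cre : R; Cim : R }.
Definition C0 : C := mkC 0 0.
Definition C1 : C := mkC 1 0.
Definition Cadd (a b : C) : C := mkC (Cre a + Cre b) (Cim a + Cim b).
Definition Cmul (a b : C) : C :=
  mkC (Cre a * Cre b - Cim a * Cim b) (Cre a * Cim b + Cim a * Cre b).
Definition Cconj (a : C) : C := mkC (Cre a) (- Cim a).

(** Complex Hilbert space: complex inner product space, complete for the norm.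
    Inner product linear in the first argument, conjugate-linear in the second. *)
Record Hilbert := {
  H :> Type;
  hzero : H;
  hadd : H -> H -> H;
  hopp : H -> H;
  hscal : C -> H -> H;
  hinner : H -> H -> C;
  hadd_assoc : forall x y z, hadd x (hadd y z) = hadd (hadd x y) z;
  hadd_comm : forall x y, hadd x y = hadd y x;
  hadd_0l : forall x, hadd hzero x = x;
  hadd_oppl : forall x, hadd (hopp x) x = hzero;
  hscal_1 : forall x, hscal C1 x = x;
  hscal_mul : forall a b x, hscal a (hscal b x) = hscal (Cmul a b) x;
  hscal_addr : forall a x y, hscal a (hadd x y) = hadd (hscal a x) (hscal a y);
  hscal_addl : forall a b x, hscal (Cadd a b) x = hadd (hscal a x) (hscal b x);
  hinner_conj : forall x y, hinner y x = Cconj (hinner x y);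
  hinner_addl : forall x y z, hinner (hadd x y) z = Cadd (hinner x z) (hinner y z);
  hinner_scall : forall a x y, hinner (hscal a x) y = Cmul a (hinner x y);
  hinner_pos : forall x, 0 <= Cre (hinner x x);
  hinner_def : forall x, hinner x x = C0 -> x = hzero;
  hcomplete : forall u : nat -> H,
    (forall eps, 0 < eps -> exists N, forall n m, (N <= n)%nat -> (N <= m)%nat ->
        sqrt (Cre (hinner (hadd (u n) (hopp (u m))) (hadd (u n) (hopp (u m))))) < eps) ->
    exists l, forall eps, 0 < eps -> exists N, forall n, (N <= n)%nat ->
        sqrt (Cre (hinner (hadd (u n) (hopp l)) (hadd (u n) (hopp l)))) < eps
}.

Section Ops.
Variable X : Hilbert.

Definition hsub (x y : X) : X := hadd X x (hopp X y).
Definition hnorm (x : X) : R := sqrt (Cre (hinner X x x)).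

Definition converges (u : nat -> X) (l : X) : Prop :=
  forall eps, 0 < eps -> exists N, forall n, (N <= n)%nat -> hnorm (hsub (u n) l) < eps.

(** A subspace in X^2 (linear relation) is a predicate on pairs, written T x f. *)
Definition rel := X -> X -> Prop.

Definition is_linear_rel (T : rel) : Prop :=
  T (hzero X) (hzero X) /\
  (forall x f y g, T x f -> T y g -> T (hadd X x y) (hadd X f g)) /\
  (forall a x f, T x f -> T (hscal X a x) (hscal X a f)).

(** Closed in X^2 (sequential closedness; convergence in X^2 is componentwise). *)
Definition is_closed_rel (T : rel) : Prop :=
  forall (u v : nat -> X) x f, (forall n, T (u n) (v n)) ->
    converges u x -> converges v f -> T x f.

Definition closed_subspace (T : rel) : Prop := is_linear_rel T /\ is_closed_rel T.

Definition dom (T : rel) (x : X) : Prop := exists f, T x f.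
Definition mul0 (T : rel) (f : X) : Prop := T (hzero X) f.

Definition perp (M : X -> Prop) (v : X) : Prop :=
  forall w, M w -> hinner X v w = C0.

Definition subset (M N : X -> Prop) : Prop := forall v, M v -> N v.

Definition adjoint (T : rel) : rel :=
  fun y g => forall x f, T x f -> hinner X g x = hinner X y f.
Definition hermitian_rel (T : rel) : Prop := forall x f, T x f -> adjoint T x f.

Definition rel_sum (S A : rel) : rel :=
  fun x h => exists f g, S x f /\ A x g /\ h = hadd X f g.

(** T_s = T ominus T_infty: the pairs (x,f) in T orthogonal to every (0,g) in T,
    i.e. with f in T(0)^perp. *)
Definition op_part_rel (T : rel) : rel := fun x f => T x f /\ perp (mul0 T) f.

Definition op_part (T : rel) (x : X) : X :=
  epsilon (inhabits (hzero X)) (fun f => op_part_rel T x f).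

Definition is_proj (M : X -> Prop) (v p : X) : Prop := M p /\ perp M (hsub v p).
Definition proj (M : X -> Prop) (v : X) : X :=
  epsilon (inhabits (hzero X)) (fun p => is_proj M v p).

End Ops.

Arguments hsub {X}. Arguments hnorm {X}. Arguments converges {X}.
Arguments is_linear_rel {X}. Arguments is_closed_rel {X}.
Arguments closed_subspace {X}. Arguments dom {X}. Arguments mul0 {X}.
Arguments perp {X}. Arguments subset {X}. Arguments adjoint {X}.
Arguments hermitian_rel {X}. Arguments rel_sum {X}.
Arguments op_part_rel {X}. Arguments op_part {X}.
Arguments is_proj {X}. Arguments proj {X}.

(* Main.v *)
From Stdlib Require Import Reals ClassicalEpsilon Classical Lra Lia List.
Require Import Defs.
Import ListNotations.

Lemma C_ext (a b : C) : Cre a = Cre b -> Cim a = Cim b -> a = b.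
Proof. destruct a, b; simpl; intros; subst; reflexivity. Qed.

Ltac Csolve := apply C_ext; simpl; first [ring | field | lra | nra].

Section Basics.
End Basics.

Lemma addr0 (X : Hilbert) (x : X) : hadd X x (hzero X) = x.
Proof. rewrite hadd_comm; apply hadd_0l. Qed.

Lemma addrN (X : Hilbert) (x : X) : hadd X x (hopp X x) = hzero X.
Proof. rewrite hadd_comm; apply hadd_oppl. Qed.

Lemma add_cancel0 (X : Hilbert) (y : X) : hadd X y y = y -> y = hzero X.
Proof.
  intro H. assert (E : hadd X (hopp X y) (hadd X y y) = hadd X (hopp X y) y) by (rewrite H; auto).
  rewrite hadd_assoc, hadd_oppl, hadd_0l in E. exact E.
Qed.

Lemma scal0 (X : Hilbert) (x : X) : hscal X C0 x = hzero X.
Proof.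
  apply add_cancel0. rewrite <- hscal_addl. f_equal. Csolve.
Qed.

Lemma scal_zero (X : Hilbert) (a : C) : hscal X a (hzero X) = hzero X.
Proof.
  apply add_cancel0. rewrite <- hscal_addr, hadd_0l. reflexivity.
Qed.

Lemma opp_scal (X : Hilbert) (x : X) : hopp X x = hscal X (mkC (-1) 0) x.
Proof.
  assert (E : hadd X (hscal X (mkC (-1) 0) x) x = hzero X).
  { rewrite <- (hscal_1 X x) at 2. rewrite <- hscal_addl, <- (scal0 X x). f_equal; Csolve. }
  rewrite <- (hadd_0l X (hopp X x)), <- E, <- hadd_assoc, addrN, addr0. reflexivity.
Qed.

Lemma swap4 (X : Hilbert) (a b c d : X) :
  hadd X (hadd X a b) (hadd X c d) = hadd X (hadd X a c) (hadd X b d).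
Proof.
  rewrite <- !hadd_assoc. f_equal. rewrite !hadd_assoc. f_equal. apply hadd_comm.
Qed.

Fixpoint lc (X : Hilbert) (env : list X) (f : nat -> C) : X :=
  match env with
  | [] => hzero X
  | x :: env' => hadd X (hscal X (f O) x) (lc X env' (fun i => f (S i)))
  end.

Lemma lc_add (X : Hilbert) env : forall f g,
  hadd X (lc X env f) (lc X env g) = lc X env (fun i => Cadd (f i) (g i)).
Proof.
  induction env as [|x env IH]; intros f g; simpl.
  - apply hadd_0l.
  - rewrite swap4, IH, hscal_addl. reflexivity.
Qed.

Lemma lc_scal (X : Hilbert) env : forall a f,
  hscal X a (lc X env f) = lc X env (fun i => Cmul a (f i)).
Proof.
  induction env as [|x env IH]; intros a f; simpl.
  - apply scal_zero.
  - rewrite hscal_addr, IH, hscal_mul. reflexivity.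
Qed.

Lemma lc_zero (X : Hilbert) env : lc X env (fun _ => C0) = hzero X.
Proof.
  induction env as [|x env IH]; simpl; auto.
  rewrite IH, scal0, hadd_0l; auto.
Qed.

Lemma lc_atom (X : Hilbert) env : forall k,
  (k < length env)%nat ->
  lc X env (fun i => if Nat.eqb i k then C1 else C0) = nth k env (hzero X).
Proof.
  induction env as [|x env IH]; intros k Hk; simpl in *.
  - lia.
  - destruct k as [|k]; simpl.
    + rewrite hscal_1. replace (fun i => if Nat.eqb (S i) 0 then C1 else C0) with (fun _ : nat => C0)
        by reflexivity. rewrite lc_zero, addr0; auto.
    + rewrite scal0, hadd_0l. apply IH. lia.
Qed.

Lemma lc_ext (X : Hilbert) env : forall f g,
  (forall i, (i < length env)%nat -> f i = g i) -> lc X env f = lc X env g.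
Proof.
  induction env as [|x env IH]; intros f g H; simpl; auto.
  rewrite (H 0%nat) by (simpl; lia). f_equal. apply IH. intros i Hi. apply H. simpl; lia.
Qed.

Inductive term := TAtom (k : nat) | TZero | TAdd (a b : term) | TSub (a b : term)
  | TOpp (a : term) | TScal (c : C) (a : term).

Fixpoint den (X : Hilbert) (env : list X) (t : term) : X :=
  match t with
  | TAtom k => nth k env (hzero X)
  | TZero => hzero X
  | TAdd a b => hadd X (den X env a) (den X env b)
  | TSub a b => hsub (den X env a) (den X env b)
  | TOpp a => hopp X (den X env a)
  | TScal c a => hscal X c (den X env a)
  end.

Definition Cm1 := mkC (-1) 0.

Fixpoint nrm (t : term) : nat -> C :=
  match t with
  | TAtom k => fun i => if Nat.eqb i k then C1 else C0
  | TZero => fun _ => C0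
  | TAdd a b => fun i => Cadd (nrm a i) (nrm b i)
  | TSub a b => fun i => Cadd (nrm a i) (Cmul Cm1 (nrm b i))
  | TOpp a => fun i => Cmul Cm1 (nrm a i)
  | TScal c a => fun i => Cmul c (nrm a i)
  end.

Fixpoint wf (n : nat) (t : term) : Prop :=
  match t with
  | TAtom k => (k < n)%nat
  | TZero => True
  | TAdd a b | TSub a b => wf n a /\ wf n b
  | TOpp a | TScal _ a => wf n a
  end.

Lemma den_nrm (X : Hilbert) env t : wf (length env) t -> den X env t = lc X env (nrm t).
Proof.
  induction t; simpl; intro W.
  - rewrite lc_atom; auto.
  - rewrite lc_zero; auto.
  - destruct W. rewrite IHt1, IHt2, lc_add by auto. reflexivity.
  - destruct W. unfold hsub. rewrite IHt1, IHt2, opp_scal, lc_scal, lc_add by auto. reflexivity.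
  - rewrite IHt, opp_scal, lc_scal by auto. reflexivity.
  - rewrite IHt, lc_scal by auto. reflexivity.
Qed.

Lemma lin_sound (X : Hilbert) env t1 t2 : wf (length env) t1 -> wf (length env) t2 ->
  (forall i, (i < length env)%nat -> nrm t1 i = nrm t2 i) -> den X env t1 = den X env t2.
Proof.
  intros W1 W2 H. rewrite !den_nrm by auto. apply lc_ext; auto.
Qed.

Ltac find_idx e l :=
  match l with
  | cons e _ => constr:(O)
  | cons _ ?l' => let n := find_idx e l' in constr:(S n)
  end.

Ltac reify e l :=
  lazymatch e with
  | hadd _ ?a ?b => let ra := reify a l in let rb := reify b l in constr:(TAdd ra rb)
  | hsub ?a ?b => let ra := reify a l in let rb := reify b l in constr:(TSub ra rb)
  | hopp _ ?a => let ra := reify a l in constr:(TOpp ra)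
  | hscal _ ?c ?a => let ra := reify a l in constr:(TScal c ra)
  | hzero _ => constr:(TZero)
  | _ => let n := find_idx e l in constr:(TAtom n)
  end.

Ltac lin l :=
  lazymatch goal with
  | |- ?e1 = ?e2 =>
    let t1 := reify e1 l in let t2 := reify e2 l in
    change (den _ l t1 = den _ l t2);
    apply lin_sound; [simpl; repeat split; lia | simpl; repeat split; lia |];
    let i := fresh "i" in let Hi := fresh "Hi" in
    intros i Hi; simpl in Hi;
    repeat (first [ exfalso; lia | destruct i as [|i]; [simpl; unfold Cm1, C0, C1; Csolve |]])
  end.

Lemma test (X : Hilbert) (v a b: X) :
  hsub v (hadd X (hscal X (mkC (/2) 0) a) (hscal X (mkC (/2) 0) b)) =
  hadd X (hscal X (mkC (/2) 0) (hsub v a)) (hscal X (mkC (/2) 0) (hsub v b)).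
Proof. lin [v; a; b]. Qed.

Lemma inner_addr (X : Hilbert) (x y z : X) :
  hinner X x (hadd X y z) = Cadd (hinner X x y) (hinner X x z).
Proof.
  rewrite hinner_conj, hinner_addl, (hinner_conj X y x), (hinner_conj X z x).
  Csolve.
Qed.

Lemma inner_scalr (X : Hilbert) a (x y : X) :
  hinner X x (hscal X a y) = Cmul (Cconj a) (hinner X x y).
Proof.
  rewrite hinner_conj, hinner_scall, (hinner_conj X y x). Csolve.
Qed.

Lemma inner_0l (X : Hilbert) (y : X) : hinner X (hzero X) y = C0.
Proof. rewrite <- (scal0 X y), hinner_scall. Csolve. Qed.

Lemma inner_0r (X : Hilbert) (y : X) : hinner X y (hzero X) = C0.
Proof. rewrite hinner_conj, inner_0l. Csolve. Qed.

Lemma Im_self (X : Hilbert) (x : X) : Cim (hinner X x x) = 0.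
Proof.
  pose proof (hinner_conj X x x) as E. destruct (hinner X x x) as [r i].
  unfold Cconj in E; simpl in *. injection E. lra.
Qed.

Lemma inner_sub_l (X : Hilbert) (x y z : X) :
  hinner X (hsub x y) z = Cadd (hinner X x z) (Cmul (mkC (-1) 0) (hinner X y z)).
Proof. unfold hsub. rewrite hinner_addl, opp_scal, hinner_scall. reflexivity. Qed.

Definition N (X : Hilbert) (x : X) := Cre (hinner X x x).

Lemma N_nonneg (X : Hilbert) (x : X) : 0 <= N X x.
Proof. apply hinner_pos. Qed.

Lemma N_lc2 (X : Hilbert) (a b : C) (x y : X) :
  N X (hadd X (hscal X a x) (hscal X b y)) =
  (Cre a * Cre a + Cim a * Cim a) * N X x + (Cre b * Cre b + Cim b * Cim b) * N X y
  + 2 * ((Cre a * Cre b + Cim a * Cim b) * Cre (hinner X x y)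
         - (Cim a * Cre b - Cre a * Cim b) * Cim (hinner X x y)).
Proof.
  unfold N. rewrite hinner_addl, !inner_addr, !hinner_scall, !inner_scalr.
  rewrite (hinner_conj X y x).
  pose proof (Im_self X x). pose proof (Im_self X y).
  destruct (hinner X x x) as [xr xi], (hinner X y y) as [yr yi], (hinner X x y) as [zr zi].
  destruct a, b. simpl in *. subst. ring.
Qed.

Lemma N_zero (X : Hilbert) : N X (hzero X) = 0.
Proof. unfold N. rewrite inner_0l. reflexivity. Qed.

Lemma N_eq0 (X : Hilbert) (x : X) : N X x = 0 -> x = hzero X.
Proof.
  intro H. apply hinner_def. apply C_ext; [exact H| apply Im_self].
Qed.

Definition subsp (X : Hilbert) (M : X -> Prop) : Prop :=
  M (hzero X) /\ (forall x y, M x -> M y -> M (hadd X x y)) /\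
  (forall a x, M x -> M (hscal X a x)) /\
  (forall u q, (forall n, M (u n)) -> converges u q -> M q).

Lemma le_eps (x y : R) : (forall e, 0 < e -> x <= y + e) -> x <= y.
Proof.
  intro H. destruct (Rle_or_lt x y) as [h|h]; auto.
  specialize (H ((x - y)/2) ltac:(lra)). lra.
Qed.

Lemma e_small (r : R) : 0 < r -> exists N0, forall n, (N0 <= n)%nat -> / INR (S n) < r.
Proof.
  intro Hr. destruct (archimed_cor1 r Hr) as [N0 [H1 H2]]. exists N0. intros n Hn.
  apply Rle_lt_trans with (/ INR N0); auto.
  apply Rinv_le_contravar. apply lt_0_INR; lia. apply le_INR; lia.
Qed.

Lemma e_pos (n : nat) : 0 < / INR (S n).
Proof. apply Rinv_0_lt_compat, lt_0_INR; lia. Qed.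

Lemma e_le1 (n : nat) : / INR (S n) <= 1.
Proof.
  rewrite <- Rinv_1. apply Rinv_le_contravar; [lra|]. rewrite S_INR. pose proof (pos_INR n). lra.
Qed.

Lemma sqrt_lt_sq (x e : R) : 0 <= x -> 0 < e -> x < e * e -> sqrt x < e.
Proof.
  intros. rewrite <- (sqrt_square e) by lra. apply sqrt_lt_1; nra.
Qed.

Lemma conv_N (X : Hilbert) (u : nat -> X) q : converges u q ->
  forall r, 0 < r -> exists N0, forall n, (N0 <= n)%nat -> N X (hsub (u n) q) < r.
Proof.
  intros Hc r Hr. destruct (Hc (sqrt r) (sqrt_lt_R0 r Hr)) as [N0 HN]. exists N0.
  intros n Hn. apply sqrt_lt_0_alt. apply HN. auto.
Qed.

Lemma proj_exists (X : Hilbert) (M : X -> Prop) : subsp X M ->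
  forall v, exists q, M q /\ perp M (hsub v q).
Proof.
  intros [M0 [Madd [Mscal Mcl]]] v.
  set (E := fun r => exists m, M m /\ r = - N X (hsub v m)).
  destruct (completeness E) as [L [HL1 HL2]].
  { exists 0. intros r [m [_ ->]]. pose proof (N_nonneg X (hsub v m)). lra. }
  { exists (- N X (hsub v (hzero X))). exists (hzero X). auto. }
  set (d2 := - L).
  assert (low : forall m, M m -> d2 <= N X (hsub v m)).
  { intros m Hm. assert (E (- N X (hsub v m))) by (exists m; auto).
    specialize (HL1 _ H). unfold d2. lra. }
  assert (d2pos : 0 <= d2).
  { assert (L <= 0). { apply HL2. intros r [m [_ ->]]. pose proof (N_nonneg X (hsub v m)). lra. }
    unfold d2; lra. }
  assert (approx : forall e, 0 < e -> exists m, M m /\ N X (hsub v m) < d2 + e).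
  { intros e He. apply NNPP. intro Hn.
    assert (L <= L - e).
    { apply HL2. intros r [m [Hm ->]].
      destruct (Rlt_or_le (N X (hsub v m)) (d2 + e)) as [h|h].
      - exfalso; apply Hn; exists m; auto.
      - unfold d2 in h. lra. }
    lra. }
  assert (Hseq : forall n, exists m, M m /\ N X (hsub v m) < d2 + / INR (S n)).
  { intro n. apply approx, e_pos. }
  set (ms := fun n => proj1_sig (constructive_indefinite_description _ (Hseq n))).
  assert (Hms : forall n, M (ms n) /\ N X (hsub v (ms n)) < d2 + / INR (S n)).
  { intro n. unfold ms. destruct (constructive_indefinite_description _ (Hseq n)); auto. }
  assert (cb : forall n k, N X (hsub (ms n) (ms k)) <= 2 * / INR (S n) + 2 * / INR (S k)).
  { intros n k. destruct (Hms n) as [Mn Nn]. destruct (Hms k) as [Mk Nk].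
    set (h := mkC (/2) 0).
    assert (Mmid : M (hadd X (hscal X h (ms n)) (hscal X h (ms k)))) by auto.
    pose proof (low _ Mmid) as Lm.
    assert (E1 : hsub v (hadd X (hscal X h (ms n)) (hscal X h (ms k))) =
                 hadd X (hscal X h (hsub v (ms n))) (hscal X h (hsub v (ms k))))
      by (unfold h; lin [v; ms n; ms k]).
    assert (E2 : hsub (ms n) (ms k) =
                 hadd X (hscal X (mkC (-1) 0) (hsub v (ms n))) (hscal X C1 (hsub v (ms k))))
      by lin [v; ms n; ms k].
    rewrite E1, N_lc2 in Lm. rewrite E2, N_lc2. unfold h in Lm. simpl in *. lra. }
  destruct (hcomplete X ms) as [q Hq].
  { intros eps Heps. destruct (e_small (eps * eps / 4)) as [N0 HN0]; [nra|].
    exists N0. intros n k Hn Hk. apply sqrt_lt_sq; auto. apply N_nonneg.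
    change (N X (hsub (ms n) (ms k)) < eps * eps). pose proof (cb n k). pose proof (HN0 n Hn). pose proof (HN0 k Hk). lra. }
  assert (Hconv : converges ms q) by exact Hq.
  assert (Mq : M q) by (apply (Mcl ms q); auto; intro n; apply Hms).
  set (w := hsub v q).
  assert (step1 : forall dl n, 0 < dl ->
     dl * N X w <= dl * (1 + dl) * (d2 + / INR (S n)) + (1 + dl) * N X (hsub (ms n) q)).
  { intros dl n Hdl. destruct (Hms n) as [_ Nn].
    assert (Ew : w = hadd X (hscal X C1 (hsub v (ms n))) (hscal X C1 (hsub (ms n) q)))
      by (unfold w; lin [v; ms n; q]).
    pose proof (N_nonneg X (hadd X (hscal X (mkC dl 0) (hsub v (ms n)))
                                   (hscal X (mkC (-1) 0) (hsub (ms n) q)))) as P.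
    rewrite N_lc2 in P. rewrite Ew, N_lc2. cbn [Cre Cim C1] in P |- *.
    set (Na := N X (hsub v (ms n))) in *. set (Nb := N X (hsub (ms n) q)) in *.
    set (R0 := Cre (hinner X (hsub v (ms n)) (hsub (ms n) q))) in *.
    assert (dl * (1 + dl) * Na <= dl * (1 + dl) * (d2 + / INR (S n))).
    { apply Rmult_le_compat_l; nra. }
    nra. }
  assert (step2 : forall dl, 0 < dl -> N X w <= (1 + dl) * d2).
  { intros dl Hdl.
    assert (dl * N X w <= dl * ((1 + dl) * d2)).
    { apply le_eps. intros eps Heps.
      set (r := eps / (4 * (1 + dl) * (1 + dl))).
      assert (Hr : 0 < r) by (unfold r; apply Rdiv_lt_0_compat; nra).
      destruct (e_small r Hr) as [N1 HN1]. destruct (conv_N X ms q Hconv r Hr) as [N2 HN2].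
      specialize (HN1 (N1 + N2)%nat ltac:(lia)). specialize (HN2 (N1 + N2)%nat ltac:(lia)).
      specialize (step1 dl (N1 + N2)%nat Hdl).
      set (en := / INR (S (N1 + N2))) in *. set (Nb := N X (hsub (ms (N1 + N2)%nat) q)) in *.
      assert (Hr4 : r * (4 * (1 + dl) * (1 + dl)) = eps) by (unfold r; field; lra).
      pose proof (N_nonneg X (hsub (ms (N1 + N2)%nat) q)). pose proof (e_pos (N1 + N2)).
      assert (dl * (1 + dl) * en <= (1 + dl) * (1 + dl) * r) by nra.
      assert ((1 + dl) * Nb <= (1 + dl) * (1 + dl) * r) by nra.
      nra. }
    apply Rmult_le_reg_l with dl; auto. }
  assert (Nw : N X w <= d2).
  { apply le_eps. intros eps Heps. specialize (step2 (eps / (d2 + 1))).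
    assert (0 < eps / (d2 + 1)) by (apply Rdiv_lt_0_compat; lra).
    specialize (step2 H).
    assert (eps / (d2 + 1) * d2 <= eps).
    { unfold Rdiv. rewrite Rmult_assoc. assert (/ (d2 + 1) * d2 <= 1).
      { apply Rmult_le_reg_l with (d2 + 1); [lra|]. field_simplify; lra. }
      nra. }
    nra. }
  exists q. split; auto. intros m Hm.
  set (c := hinner X w m).
  assert (K0 : Cre c * Cre c + Cim c * Cim c <= 0).
  { set (s := / (N X m + 1)).
    pose proof (N_nonneg X m) as Nm.
    assert (Hs : 0 < s) by (apply Rinv_0_lt_compat; lra).
    assert (Hs2 : s * N X m < 1).
    { unfold s. apply Rmult_lt_reg_l with (N X m + 1); [lra|].
      field_simplify; lra. }
    set (t := mkC (s * Cre c) (s * Cim c)).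
    assert (Mt : M (hadd X q (hscal X t m))) by auto.
    pose proof (low _ Mt) as Lt.
    assert (Et : hsub v (hadd X q (hscal X t m)) =
       hadd X (hscal X C1 w) (hscal X (mkC (- (s * Cre c)) (- (s * Cim c))) m))
      by (unfold w, t; lin [v; q; m]).
    rewrite Et, N_lc2 in Lt. simpl in Lt. fold c in Lt.
    set (K := Cre c * Cre c + Cim c * Cim c) in *.
    assert (HK : 0 <= K) by (unfold K; nra).
    assert (2 * s * K <= s * s * K * N X m)  by (assert (Lt2 : d2 <= N X w + s * s * K * N X m - 2 * s * K) by (unfold K; lra); lra).
    assert (2 * K <= s * K * N X m).
    { apply Rmult_le_reg_l with s; auto. nra. }
    nra. }
  apply C_ext; simpl; fold w; fold c; nra.
Qed.

Lemma conv_const0 (X : Hilbert) : converges (fun _ : nat => hzero X) (hzero X).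
Proof.
  intros eps Heps. exists 0%nat. intros n _.
  change (sqrt (N X (hsub (hzero X) (hzero X))) < eps).
  replace (hsub (hzero X) (hzero X)) with (hzero X) by lin (@nil X).
  rewrite N_zero, sqrt_0. exact Heps.
Qed.

Lemma subsp_mul0 (X : Hilbert) (T : rel X) : closed_subspace T -> subsp X (mul0 T).
Proof.
  intros [[T0 [Tadd Tscal]] Tcl]. unfold mul0. split; [exact T0|]. split; [|split].
  - intros x y Hx Hy. pose proof (Tadd _ _ _ _ Hx Hy) as H. rewrite hadd_0l in H. exact H.
  - intros a x Hx. pose proof (Tscal a _ _ Hx) as H. rewrite scal_zero in H. exact H.
  - intros u q Hu Hc. apply (Tcl (fun _ => hzero X) u); auto. apply conv_const0.
Qed.

Lemma perp_add (X : Hilbert) (M : X -> Prop) x y : perp M x -> perp M y -> perp M (hadd X x y).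
Proof. intros Hx Hy w Hw. rewrite hinner_addl, Hx, Hy by auto. Csolve. Qed.

Lemma perp_scal (X : Hilbert) (M : X -> Prop) a x : perp M x -> perp M (hscal X a x).
Proof. intros Hx w Hw. rewrite hinner_scall, Hx by auto. Csolve. Qed.

Lemma perp_zero (X : Hilbert) (M : X -> Prop) : perp M (hzero X).
Proof. intros w _. apply inner_0l. Qed.

Lemma perp_sub (X : Hilbert) (M : X -> Prop) x y : perp M x -> perp M y -> perp M (hsub x y).
Proof. intros. unfold hsub. rewrite opp_scal. apply perp_add; auto. apply perp_scal; auto. Qed.

Lemma perp_of_M (X : Hilbert) (M : X -> Prop) q : M q -> perp (perp M) q.
Proof. intros Hq w Hw. rewrite hinner_conj, Hw by auto. Csolve. Qed.

Lemma eq_of_sub0 (X : Hilbert) (p p' : X) : hsub p p' = hzero X -> p = p'.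
Proof.
  intro H. transitivity (hadd X (hsub p p') p'); [lin [p; p'] |].
  rewrite H, hadd_0l. reflexivity.
Qed.

Lemma proj_spec (X : Hilbert) (M : X -> Prop) : subsp X M ->
  forall v, is_proj (perp M) v (proj (perp M) v).
Proof.
  intros HM v. unfold proj. apply epsilon_spec.
  destruct (proj_exists X M HM v) as [q [Mq Pq]].
  exists (hsub v q). split; auto.
  replace (hsub v (hsub v q)) with q by lin [v; q]. apply perp_of_M; auto.
Qed.

Lemma proj_unique (X : Hilbert) (M : X -> Prop) v p p' :
  is_proj (perp M) v p -> is_proj (perp M) v p' -> p = p'.
Proof.
  intros [Hp Hvp] [Hp' Hvp']. apply eq_of_sub0, N_eq0.
  assert (Hd : perp M (hsub p p')) by (apply perp_sub; auto).
  unfold N. replace (hsub p p') with (hsub (hsub v p') (hsub v p)) at 1 by lin [v; p; p'].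
  rewrite inner_sub_l, Hvp', Hvp by auto. simpl; ring.
Qed.

Lemma rel_sub (X : Hilbert) (S : rel X) : closed_subspace S ->
  forall x f y g, S x f -> S y g -> S (hsub x y) (hsub f g).
Proof.
  intros [[S0 [Sadd Sscal]] _] x f y g Hf Hg. unfold hsub. rewrite !opp_scal.
  apply Sadd; auto.
Qed.

Lemma op_spec (X : Hilbert) (S : rel X) : closed_subspace S ->
  forall x, dom S x -> op_part_rel S x (op_part S x).
Proof.
  intros HS x [f Hf]. unfold op_part. apply epsilon_spec.
  destruct (proj_exists X (mul0 S) (subsp_mul0 X S HS) f) as [q [Mq Pq]].
  exists (hsub f q). split; auto.
  pose proof (rel_sub X S HS _ _ _ _ Hf Mq) as H.
  replace (hsub x (hzero X)) with x in H by lin [x]. exact H.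
Qed.

Lemma op_unique (X : Hilbert) (S : rel X) : closed_subspace S ->
  forall x f g, op_part_rel S x f -> op_part_rel S x g -> f = g.
Proof.
  intros HS x f g [Hf Pf] [Hg Pg]. apply eq_of_sub0, N_eq0.
  pose proof (rel_sub X S HS _ _ _ _ Hf Hg) as H.
  replace (hsub x x) with (hzero X) in H by lin [x].
  unfold N. rewrite inner_sub_l, Pf, Pg by exact H. simpl; ring.
Qed.

Lemma proj_inner (X : Hilbert) (M : X -> Prop) u p y :
  is_proj (perp M) u p -> perp M y -> hinner X p y = hinner X u y.
Proof.
  intros [_ Hup] Hy. pose proof (Hup y Hy) as E. rewrite inner_sub_l in E.
  destruct (hinner X p y) as [a b], (hinner X u y) as [c d].
  injection E; simpl; intros. apply C_ext; simpl; lra.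
Qed.

Theorem theorem3p1 (X : Hilbert) (T S A : rel X) :
  closed_subspace T -> closed_subspace S -> closed_subspace A ->
  (forall x, dom T x <-> dom S x) ->
  (forall x, dom T x -> dom A x) ->
  (forall x h, T x h <-> rel_sum S A x h) ->
  subset (perp (mul0 T)) (perp (mul0 S)) /\
  subset (perp (mul0 T)) (perp (mul0 A)) /\
  (forall x, dom T x ->
     op_part T x =
     hadd X (proj (perp (mul0 T)) (op_part S x)) (proj (perp (mul0 T)) (op_part A x))) /\
  (hermitian_rel S -> hermitian_rel A ->
     forall x y, dom T x -> dom T y ->
       hinner X (proj (perp (mul0 T)) (op_part S x)) y =
         hinner X x (proj (perp (mul0 T)) (op_part S y)) /\
       hinner X (proj (perp (mul0 T)) (op_part A x)) y =
         hinner X x (proj (perp (mul0 T)) (op_part A y))).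
Proof.
  intros HT HS HA HdS HdA Hsum.
  pose proof HS as [[S0 _] _]. pose proof HA as [[A0 _] _].
  pose proof (subsp_mul0 X T HT) as MT.
  split; [|split; [|split]].
  - intros v Hv w Hw. apply Hv. unfold mul0. apply Hsum.
    exists w, (hzero X). split; auto. split; auto. rewrite addr0; auto.
  - intros v Hv w Hw. apply Hv. unfold mul0. apply Hsum.
    exists (hzero X), w. split; auto. split; auto. rewrite hadd_0l; auto.
  - intros x Hx.
    destruct (op_spec X T HT x Hx) as [Tt Pt].
    set (t := op_part T x) in *.
    destruct (proj1 (Hsum x t) Tt) as [f [g [Sf [Ag Etfg]]]].
    assert (HxS : dom S x) by (apply HdS; auto).
    assert (HxA : dom A x) by (apply HdA; auto).
    destruct (op_spec X S HS x HxS) as [Ss _].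
    destruct (op_spec X A HA x HxA) as [Aa _].
    set (s := op_part S x) in *. set (a := op_part A x) in *.
    pose proof (rel_sub X S HS _ _ _ _ Sf Ss) as S1.
    pose proof (rel_sub X A HA _ _ _ _ Ag Aa) as A1.
    replace (hsub x x) with (hzero X) in S1, A1 by lin [x].
    set (t0 := hadd X (hsub f s) (hsub g a)).
    assert (Mt0 : mul0 T t0).
    { unfold mul0. apply Hsum. exists (hsub f s), (hsub g a). auto. }
    pose proof (proj_spec X _ MT s) as Ps. pose proof (proj_spec X _ MT a) as Pa.
    set (ps := proj (perp (mul0 T)) s) in *. set (pa := proj (perp (mul0 T)) a) in *.
    apply (proj_unique X (mul0 T) t).
    + split; auto. replace (hsub t t) with (hzero X) by lin [t]. apply perp_zero.
    + destruct Ps as [Ps1 Ps2]. destruct Pa as [Pa1 Pa2]. split.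
      * apply perp_add; auto.
      * replace (hsub t (hadd X ps pa)) with
          (hadd X (hsub s ps) (hadd X (hsub a pa) t0))
          by (rewrite Etfg; unfold t0; lin [f; g; s; a; ps; pa]).
        apply perp_add; auto. apply perp_add; auto. apply perp_of_M; auto.
  - intros HhS HhA.
    assert (DP : forall y, dom T y -> perp (mul0 T) y).
    { intros y Hy w Hw. unfold mul0 in Hw. apply Hsum in Hw.
      destruct Hw as [f [g [Sf [Ag ->]]]].
      destruct (proj1 (HdS y) Hy) as [hs Hs]. destruct (HdA y Hy) as [ha Ha].
      rewrite inner_addr, (hinner_conj X f y), (hinner_conj X g y).
      rewrite (HhS _ _ Sf _ _ Hs), (HhA _ _ Ag _ _ Ha), !inner_0l. Csolve. }
    intros x y Hx Hy.
    assert (HxS : dom S x) by (apply HdS; auto). assert (HyS : dom S y) by (apply HdS; auto).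
    assert (HxA : dom A x) by (apply HdA; auto). assert (HyA : dom A y) by (apply HdA; auto).
    destruct (op_spec X S HS x HxS) as [Sx _]. destruct (op_spec X S HS y HyS) as [Sy _].
    destruct (op_spec X A HA x HxA) as [Ax _]. destruct (op_spec X A HA y HyA) as [Ay _].
    split.
    + rewrite (proj_inner X _ _ _ y (proj_spec X _ MT _) (DP y Hy)).
      rewrite (hinner_conj X (proj _ _) x).
      rewrite (proj_inner X _ _ _ x (proj_spec X _ MT _) (DP x Hx)).
      rewrite (HhS _ _ Sx _ _ Sy). rewrite (hinner_conj X (op_part S y) x). reflexivity.
    + rewrite (proj_inner X _ _ _ y (proj_spec X _ MT _) (DP y Hy)).
      rewrite (hinner_conj X (proj _ _) x).
      rewrite (proj_inner X _ _ _ x (proj_spec X _ MT _) (DP x Hx)).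
      rewrite (HhA _ _ Ax _ _ Ay). rewrite (hinner_conj X (op_part A y) x). reflexivity.
Qed.
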